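(* Let $G$ be a two-player stage game with $|V_1^{m,p}|>1$ and $|V_2^{m,p}|>1$. If $G\in\mathcal{G}_{LS}^{m,m}$, then $G\in\mathcal{G}_{LS}^{m,p}$.
   Context: A two-player stage game $G$ has finite nonempty action sets $A_1,A_2$ and payoffs $u_1,u_2:A_1\times A_2\to\mathbb{R}$, extended to mixed strategies by expectation. $G(T)$ is the $T$-round repetition with realized actions observed each round and payoffs the expected sum of stage payoffs; an SPE of $G(T)$ is a strategy profile whose continuation after every history of length $k<T$ is a Nash equilibrium of $G(T-k)$. Regimes: pure-pure ($p,p$): both players restricted to actions (in the stage game and in every round, including deviations); mixed-pure ($m,p$): player 1 may mix, player 2 uses only actions; mixed-mixed ($m,m$): both may mix. For regime $r$, $\mathrm{Nash}^r(G)$ is the set of stage-game profiles available in $r$ from which no player can profitably deviate unilaterally to a strategy available in $r$, and $V_i^r=\{u_i(\sigma):\sigma\in\mathrm{Nash}^r(G)\}$. Locally suboptimal behavior occurs in an SPE $\mu$ of $G(T)$ (regime $r$) if for some history $h$ of length $k<T$, $(\mu_1(h),\mu_2(h))\notin\mathrm{Nash}^r(G)$. $\mathcal{G}_{LS}^r$ is the set of stage games $G$ for which there exist $T\ge1$ and an SPE of $G(T)$ in regime $r$ in which locally suboptimal behavior occurs. *)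

(* Defs.v *)
From HB Require Import structures.
From mathcomp Require Import all_boot all_order all_algebra.
From mathcomp Require Import reals.
Set Implicit Arguments. Unset Strict Implicit. Unset Printing Implicit Defensive.
Import Order.TTheory GRing.Theory Num.Theory.
Local Open Scope ring_scope.

Record game (R : realType) (A1 A2 : finType) := Game {
  u1 : A1 -> A2 -> R;
  u2 : A1 -> A2 -> R }.

Definition is_mixed (R : realType) (A : finType) (p : {ffun A -> R}) : Prop :=
  (forall a, 0 <= p a) /\ \sum_(a : A) p a = 1.

Definition dirac (R : realType) (A : finType) (a : A) : {ffun A -> R} :=
  [ffun b => (b == a)%:R].

Definition is_pure (R : realType) (A : finType) (p : {ffun A -> R}) : Prop :=
  exists a : A, p = dirac R a.

Definition avail (R : realType) (A : finType) (m : bool) (p : {ffun A -> R}) : Prop :=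
  if m then is_mixed p else is_pure p.

Record regime := Regime { mix1 : bool; mix2 : bool }.
Definition PP := Regime false false.
Definition MP := Regime true false.
Definition MM := Regime true true.

Definition exp_pay (R : realType) (A1 A2 : finType) (u : A1 -> A2 -> R)
  (p1 : {ffun A1 -> R}) (p2 : {ffun A2 -> R}) : R :=
  \sum_(a1 : A1) \sum_(a2 : A2) p1 a1 * p2 a2 * u a1 a2.

Definition stage_nash (R : realType) (A1 A2 : finType) (r : regime)
  (G : game R A1 A2) (p1 : {ffun A1 -> R}) (p2 : {ffun A2 -> R}) : Prop :=
  [/\ avail (mix1 r) p1, avail (mix2 r) p2,
      (forall q1, avail (mix1 r) q1 -> exp_pay (u1 G) q1 p2 <= exp_pay (u1 G) p1 p2) &
      (forall q2, avail (mix2 r) q2 -> exp_pay (u2 G) p1 q2 <= exp_pay (u2 G) p1 p2)].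

Definition V1 (R : realType) (A1 A2 : finType) (r : regime) (G : game R A1 A2) (x : R) : Prop :=
  exists p1 p2, stage_nash r G p1 p2 /\ x = exp_pay (u1 G) p1 p2.
Definition V2 (R : realType) (A1 A2 : finType) (r : regime) (G : game R A1 A2) (x : R) : Prop :=
  exists p1 p2, stage_nash r G p1 p2 /\ x = exp_pay (u2 G) p1 p2.

Definition more_than_one (R : realType) (P : R -> Prop) : Prop :=
  exists x y, [/\ P x, P y & x <> y].

(* Histories: chronological sequences of realized action profiles.
   A strategy of player i maps histories to (mixed) stage strategies. *)
Definition history (A1 A2 : finType) := seq (A1 * A2)%type.
Definition strat (R : realType) (A1 A2 : finType) (A : finType) :=
  history A1 A2 -> {ffun A -> R}.

Fixpoint cont_pay (R : realType) (A1 A2 : finType) (u : A1 -> A2 -> R)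
  (s1 : strat R A1 A2 A1) (s2 : strat R A1 A2 A2) (h : history A1 A2) (n : nat) : R :=
  match n with
  | 0 => 0
  | n'.+1 => \sum_(a1 : A1) \sum_(a2 : A2)
               s1 h a1 * s2 h a2 * (u a1 a2 + cont_pay u s1 s2 (rcons h (a1, a2)) n')
  end.

Definition rep_pay (R : realType) (A1 A2 : finType) (u : A1 -> A2 -> R)
  (s1 : strat R A1 A2 A1) (s2 : strat R A1 A2 A2) (n : nat) : R :=
  cont_pay u s1 s2 [::] n.

Definition avail_strat (R : realType) (A1 A2 A : finType) (m : bool)
  (s : strat R A1 A2 A) : Prop := forall h, avail m (s h).

Definition shift (R : realType) (A1 A2 A : finType) (s : strat R A1 A2 A)
  (h : history A1 A2) : strat R A1 A2 A := fun h' => s (h ++ h').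

Definition rep_nash (R : realType) (A1 A2 : finType) (r : regime) (G : game R A1 A2)
  (n : nat) (s1 : strat R A1 A2 A1) (s2 : strat R A1 A2 A2) : Prop :=
  [/\ avail_strat (mix1 r) s1, avail_strat (mix2 r) s2,
      (forall t1, avail_strat (mix1 r) t1 -> rep_pay (u1 G) t1 s2 n <= rep_pay (u1 G) s1 s2 n) &
      (forall t2, avail_strat (mix2 r) t2 -> rep_pay (u2 G) s1 t2 n <= rep_pay (u2 G) s1 s2 n)].

Definition is_SPE (R : realType) (A1 A2 : finType) (r : regime) (G : game R A1 A2)
  (T : nat) (s1 : strat R A1 A2 A1) (s2 : strat R A1 A2 A2) : Prop :=
  forall h : history A1 A2, (size h < T)%N ->
    rep_nash r G (T - size h) (shift s1 h) (shift s2 h).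

Definition loc_subopt (R : realType) (A1 A2 : finType) (r : regime) (G : game R A1 A2)
  (T : nat) (s1 : strat R A1 A2 A1) (s2 : strat R A1 A2 A2) : Prop :=
  exists h : history A1 A2, (size h < T)%N /\ ~ stage_nash r G (s1 h) (s2 h).

Definition in_GLS (R : realType) (A1 A2 : finType) (r : regime) (G : game R A1 A2) : Prop :=
  exists (T : nat) (s1 : strat R A1 A2 A1) (s2 : strat R A1 A2 A2),
    [/\ (1 <= T)%N, is_SPE r G T s1 s2 & loc_subopt r G T s1 s2].

(* Main.v *)
Require Import Defs.
From mathcomp Require Import all_boot all_order all_algebra.
From mathcomp Require Import reals.
From Stdlib Require Import Classical.
From mathcomp Require Import lra.
Set Implicit Arguments. Unset Strict Implicit. Unset Printing Implicit Defensive.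
Import Order.TTheory GRing.Theory Num.Theory.
Local Open Scope ring_scope.

Lemma sum_dirac (R : realType) (A : finType) (a : A) (F : A -> R) :
  \sum_(b : A) dirac R a b * F b = F a.
Proof.
rewrite (bigD1 a) //= big1 ?addr0; first by rewrite ffunE eqxx mul1r.
by move=> b /negbTE nb; rewrite ffunE nb mul0r.
Qed.

Lemma dirac_mixed (R : realType) (A : finType) (a : A) : is_mixed (dirac R a).
Proof.
split; first by move=> b; rewrite ffunE ler0n.
by rewrite -(sum_dirac a (fun _ => 1)); apply: eq_bigr => b _; rewrite mulr1.
Qed.

Lemma avail_mixed (R : realType) (A : finType) m (p : {ffun A -> R}) :
  avail m p -> is_mixed p.
Proof. by case: m => //= -[a ->]; apply: dirac_mixed. Qed.

Lemma sum2_const (R : realType) (A1 A2 : finType) (p : {ffun A1 -> R}) (q : {ffun A2 -> R}) c :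
  is_mixed p -> is_mixed q ->
  \sum_(a1 : A1) \sum_(a2 : A2) p a1 * q a2 * c = c.
Proof.
move=> [_ hp] [_ hq].
transitivity (\sum_(a1 : A1) p a1 * c).
  apply: eq_bigr => a1 _; rewrite -mulr_suml -mulr_sumr hq mulr1 //.
by rewrite -mulr_suml hp mul1r.
Qed.

Lemma sum2_split (R : realType) (A1 A2 : finType) (u : A1 -> A2 -> R)
  (p : {ffun A1 -> R}) (q : {ffun A2 -> R}) c :
  is_mixed p -> is_mixed q ->
  \sum_(a1 : A1) \sum_(a2 : A2) p a1 * q a2 * (u a1 a2 + c) = exp_pay u p q + c.
Proof.
move=> hp hq; rewrite /exp_pay -[X in _ = _ + X](sum2_const c hp hq) -big_split /=.
by apply: eq_bigr => a1 _; rewrite -big_split /=; apply: eq_bigr => a2 _; rewrite mulrDr.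
Qed.

Lemma sum2_le (R : realType) (A1 A2 : finType) (p : {ffun A1 -> R}) (q : {ffun A2 -> R})
  (F G : A1 -> A2 -> R) :
  is_mixed p -> is_mixed q -> (forall a1 a2, F a1 a2 <= G a1 a2) ->
  \sum_(a1 : A1) \sum_(a2 : A2) p a1 * q a2 * F a1 a2 <=
  \sum_(a1 : A1) \sum_(a2 : A2) p a1 * q a2 * G a1 a2.
Proof.
move=> [p0 _] [q0 _] h; apply: ler_sum => a1 _; apply: ler_sum => a2 _.
by apply: ler_wpM2l; [apply: mulr_ge0|].
Qed.

Lemma cont_shift (R : realType) (A1 A2 : finType) (u : A1 -> A2 -> R) s1 s2 h0 n :
  forall h, cont_pay u s1 s2 (h0 ++ h) n = cont_pay u (shift s1 h0) (shift s2 h0) h n.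
Proof.
elim: n => //= n IH h; apply: eq_bigr => a1 _; apply: eq_bigr => a2 _.
by rewrite -IH rcons_cat.
Qed.
Lemma nash_mixed (R : realType) (A1 A2 : finType) (G : game R A1 A2) p q :
  stage_nash MP G p q -> is_mixed p /\ is_mixed q.
Proof. by case=> hp hq _ _; split; [apply: (avail_mixed hp)|apply: (avail_mixed hq)]. Qed.

Lemma markov_eq (R : realType) (A1 A2 : finType) (u : A1 -> A2 -> R)
  (f1 : nat -> {ffun A1 -> R}) (f2 : nat -> {ffun A2 -> R}) s1 s2 :
  (forall k, is_mixed (f1 k) /\ is_mixed (f2 k)) ->
  (forall h, s1 h = f1 (size h)) -> (forall h, s2 h = f2 (size h)) ->
  forall n h, cont_pay u s1 s2 h n =
    \sum_(k < n) exp_pay u (f1 (size h + k)%N) (f2 (size h + k)%N).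
Proof.
move=> hf hs1 hs2; elim=> [|n IH] h /=; first by rewrite big_ord0.
rewrite big_ord_recl /= addn0 hs1 hs2.
have [m1 m2] := hf (size h).
rewrite -(sum2_split u _ m1 m2).
apply: eq_bigr => a1 _; apply: eq_bigr => a2 _; rewrite IH size_rcons.
congr (_ * (_ + _)); apply: eq_bigr => k _; by rewrite /bump leq0n add1n addSnnS.
Qed.

Lemma markov_le1 (R : realType) (A1 A2 : finType) (G : game R A1 A2)
  (f1 : nat -> {ffun A1 -> R}) (f2 : nat -> {ffun A2 -> R}) s2 :
  (forall k, stage_nash MP G (f1 k) (f2 k)) -> (forall h, s2 h = f2 (size h)) ->
  forall t1, avail_strat true t1 ->
  forall n h, cont_pay (u1 G) t1 s2 h n <=
    \sum_(k < n) exp_pay (u1 G) (f1 (size h + k)%N) (f2 (size h + k)%N).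
Proof.
move=> hf hs2 t1 ht1; elim=> [|n IH] h /=; first by rewrite big_ord0.
rewrite big_ord_recl /= addn0 hs2.
have [m1 m2] := nash_mixed (hf (size h)).
have mt := avail_mixed (ht1 h).
set S := \sum_(i < n) _.
have -> : S = \sum_(k < n) exp_pay (u1 G) (f1 ((size h).+1 + k)%N) (f2 ((size h).+1 + k)%N).
  by apply: eq_bigr => k _; rewrite /bump leq0n add1n addSnnS.
apply: le_trans (sum2_le (G := fun a1 a2 => u1 G a1 a2 + \sum_(k < n) exp_pay (u1 G) (f1 ((size h).+1 + k)%N) (f2 ((size h).+1 + k)%N)) mt m2 _) _.
  by move=> a1 a2; rewrite lerD2l; have := IH (rcons h (a1, a2)); rewrite size_rcons.
rewrite (sum2_split _ _ mt m2) lerD2r.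
by case: (hf (size h)) => _ _ H _; apply: H.
Qed.

Lemma markov_le2 (R : realType) (A1 A2 : finType) (G : game R A1 A2)
  (f1 : nat -> {ffun A1 -> R}) (f2 : nat -> {ffun A2 -> R}) s1 :
  (forall k, stage_nash MP G (f1 k) (f2 k)) -> (forall h, s1 h = f1 (size h)) ->
  forall t2, avail_strat false t2 ->
  forall n h, cont_pay (u2 G) s1 t2 h n <=
    \sum_(k < n) exp_pay (u2 G) (f1 (size h + k)%N) (f2 (size h + k)%N).
Proof.
move=> hf hs1 t2 ht2; elim=> [|n IH] h /=; first by rewrite big_ord0.
rewrite big_ord_recl /= addn0 hs1.
have [m1 m2] := nash_mixed (hf (size h)).
have mt := avail_mixed (ht2 h).
set S := \sum_(i < n) _.
have -> : S = \sum_(k < n) exp_pay (u2 G) (f1 ((size h).+1 + k)%N) (f2 ((size h).+1 + k)%N).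
  by apply: eq_bigr => k _; rewrite /bump leq0n add1n addSnnS.
apply: le_trans (sum2_le (G := fun a1 a2 => u2 G a1 a2 + \sum_(k < n) exp_pay (u2 G) (f1 ((size h).+1 + k)%N) (f2 ((size h).+1 + k)%N)) m1 mt _) _.
  by move=> a1 a2; rewrite lerD2l; have := IH (rcons h (a1, a2)); rewrite size_rcons.
rewrite (sum2_split _ _ m1 mt) lerD2r.
by case: (hf (size h)) => _ _ _ H; apply: H.
Qed.
Lemma exp_dirac1 (R : realType) (A1 A2 : finType) (u : A1 -> A2 -> R) (a : A1) (q : {ffun A2 -> R}) :
  exp_pay u (dirac R a) q = \sum_(a2 : A2) q a2 * u a a2.
Proof.
rewrite /exp_pay (_ : \sum_(a1 : A1) _ = \sum_(b : A1) dirac R a b * (\sum_(a2 : A2) q a2 * u b a2)).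
  by rewrite sum_dirac.
by apply: eq_bigr => b _; rewrite mulr_sumr; apply: eq_bigr => a2 _; rewrite !mulrA.
Qed.

Lemma exp_dirac12 (R : realType) (A1 A2 : finType) (u : A1 -> A2 -> R) (a : A1) (b : A2) :
  exp_pay u (dirac R a) (dirac R b) = u a b.
Proof. by rewrite exp_dirac1 sum_dirac. Qed.

Lemma collapse1 (R : realType) (A1 A2 : finType) (a : A1) (q : {ffun A2 -> R}) (F : A1 -> A2 -> R) :
  \sum_(b1 : A1) \sum_(b2 : A2) dirac R a b1 * q b2 * F b1 b2 = \sum_(b2 : A2) q b2 * F a b2.
Proof.
rewrite (_ : \sum_(b1 : A1) _ = \sum_(b1 : A1) dirac R a b1 * (\sum_(b2 : A2) q b2 * F b1 b2)).
  by rewrite sum_dirac.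
by apply: eq_bigr => b _; rewrite mulr_sumr; apply: eq_bigr => a2 _; rewrite !mulrA.
Qed.

Lemma collapse2 (R : realType) (A1 A2 : finType) (p : {ffun A1 -> R}) (a : A2) (F : A1 -> A2 -> R) :
  \sum_(b1 : A1) \sum_(b2 : A2) p b1 * dirac R a b2 * F b1 b2 = \sum_(b1 : A1) p b1 * F b1 a.
Proof.
apply: eq_bigr => b1 _.
rewrite (_ : \sum_(b2 : A2) _ = \sum_(b2 : A2) dirac R a b2 * (p b1 * F b1 b2)).
  by rewrite sum_dirac.
by apply: eq_bigr => b2 _; rewrite [p b1 * _]mulrC -mulrA.
Qed.

Lemma const1 (R : realType) (A1 A2 : finType) (u : A1 -> A2 -> R) (a0 : A1)
  (q p2 : {ffun _ -> R}) :
  is_mixed q -> (forall a a2, u a a2 = u a0 a2) ->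
  exp_pay u q p2 = \sum_(a2 : A2) p2 a2 * u a0 a2.
Proof.
move=> [_ hq] hu; rewrite /exp_pay.
rewrite (_ : \sum_(a1 : A1) _ = \sum_(a1 : A1) q a1 * (\sum_(a2 : A2) p2 a2 * u a0 a2)).
  by rewrite -mulr_suml hq mul1r.
by apply: eq_bigr => b _; rewrite mulr_sumr; apply: eq_bigr => a2 _; rewrite hu !mulrA.
Qed.

Lemma const2 (R : realType) (A1 A2 : finType) (u : A1 -> A2 -> R) (b0 : A2)
  (p1 : {ffun A1 -> R}) (q : {ffun A2 -> R}) :
  is_mixed q -> (forall a b, u a b = u a b0) ->
  exp_pay u p1 q = \sum_(a1 : A1) p1 a1 * u a1 b0.
Proof.
move=> [_ hq] hu; rewrite /exp_pay; apply: eq_bigr => a1 _.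
rewrite (_ : \sum_(a2 : A2) _ = \sum_(a2 : A2) (p1 a1 * u a1 b0) * q a2).
  by rewrite -mulr_sumr hq mulr1.
by apply: eq_bigr => b _; rewrite hu mulrAC.
Qed.

Lemma allpure_nash (R : realType) (A1 A2 : finType) (G : game R A1 A2) (a0 : A1) (b0 : A2) :
  (forall a1 a2, stage_nash MP G (dirac R a1) (dirac R a2)) ->
  forall p1 p2, is_mixed p1 -> is_mixed p2 -> stage_nash MM G p1 p2.
Proof.
move=> hall p1 p2 m1 m2.
have h1 : forall a a2, u1 G a a2 = u1 G a0 a2.
  move=> a a2; apply/le_anti/andP; split.
    case: (hall a0 a2) => _ _ H _; have := H (dirac R a) (@dirac_mixed R _ a).
    by rewrite !exp_dirac12.
  case: (hall a a2) => _ _ H _; have := H (dirac R a0) (@dirac_mixed R _ a0).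
  by rewrite !exp_dirac12.
have h2 : forall a b, u2 G a b = u2 G a b0.
  move=> a b; apply/le_anti/andP; split.
    case: (hall a b0) => _ _ _ H; have := H (dirac R b) (ex_intro _ b erefl).
    by rewrite !exp_dirac12.
  case: (hall a b) => _ _ _ H; have := H (dirac R b0) (ex_intro _ b0 erefl).
  by rewrite !exp_dirac12.
split=> //= q hq.
  by rewrite (const1 _ hq h1) (const1 _ m1 h1).
by rewrite (@const2 _ _ _ _ b0 p1 q hq h2) (@const2 _ _ _ _ b0 p1 p2 m2 h2).
Qed.

Lemma pure_nonnash (R : realType) (A1 A2 : finType) (G : game R A1 A2) :
  (0 < #|A1|)%N -> (0 < #|A2|)%N -> in_GLS MM G ->
  exists a1 a2, ~ stage_nash MP G (dirac R a1) (dirac R a2).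
Proof.
case/card_gt0P=> a0 _; case/card_gt0P=> b0 _.
case=> T [s1 [s2 [_ hspe [h [hs hn]]]]].
have [av1 av2 _ _] := hspe h hs.
have m1 : is_mixed (s1 h) by have := av1 [::]; rewrite /shift cats0.
have m2 : is_mixed (s2 h) by have := av2 [::]; rewrite /shift cats0.
apply: NNPP => hne; apply: hn; apply: (allpure_nash a0 b0) => // a1 a2.
by apply: NNPP => hc; apply: hne; exists a1, a2.
Qed.

Lemma get_two1 (R : realType) (A1 A2 : finType) (G : game R A1 A2) :
  more_than_one (V1 MP G) -> exists p q p' q',
  [/\ stage_nash MP G p q, stage_nash MP G p' q' & exp_pay (u1 G) p' q' < exp_pay (u1 G) p q].
Proof.
case=> x [y [[p [q [hn ->]]] [p' [q' [hn' ->]]] hxy]].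
case: (ltgtP (exp_pay (u1 G) p q) (exp_pay (u1 G) p' q')) => h.
- by exists p', q', p, q.
- by exists p, q, p', q'.
- by [].
Qed.

Lemma get_two2 (R : realType) (A1 A2 : finType) (G : game R A1 A2) :
  more_than_one (V2 MP G) -> exists p q p' q',
  [/\ stage_nash MP G p q, stage_nash MP G p' q' & exp_pay (u2 G) p' q' < exp_pay (u2 G) p q].
Proof.
case=> x [y [[p [q [hn ->]]] [p' [q' [hn' ->]]] hxy]].
case: (ltgtP (exp_pay (u2 G) p q) (exp_pay (u2 G) p' q')) => h.
- by exists p', q', p, q.
- by exists p, q, p', q'.
- by [].
Qed.

Lemma count1 (R : realType) (K : nat) (d : R) n :
  \sum_(k < n) (if (1 + k <= K)%N then d else 0) = (minn n K)%:R * d.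
Proof.
elim: n => [|n IH]; first by rewrite big_ord0 min0n mul0r.
rewrite big_ord_recr /= IH add1n.
case: (leqP n.+1 K) => hK.
  rewrite (minn_idPl (ltnW hK)).
  by rewrite -addn1 natrD mulrDl mul1r.
have hK' : (K <= n)%N by []. 
by rewrite (minn_idPr hK') addr0.
Qed.

Lemma count2 (R : realType) (K : nat) (d : R) n :
  \sum_(k < n) (if (1 + k <= K)%N then 0 else d) = (n - minn n K)%:R * d.
Proof.
elim: n => [|n IH]; first by rewrite big_ord0 mul0r.
rewrite big_ord_recr /= IH add1n.
case: (leqP n.+1 K) => hK.
  by rewrite (minn_idPl (ltnW hK)) !subnn addr0.
have hK' : (K <= n)%N by [].
rewrite (minn_idPr hK') subSn //.
by rewrite -addn1 natrD mulrDl mul1r.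
Qed.
Definition cls (A1 A2 : eqType) (a1 : A1) (a2 : A2) (e : A1 * A2) : nat :=
  if e.1 != a1 then 1%N else if e.2 != a2 then 2%N else 0%N.
Definition gsel (X : Type) (K c k : nat) (xh xl yh yl : X) : X :=
  if (k <= K)%N then (if c == 1%N then xl else xh) else (if c == 2%N then yl else yh).
Definition mkstrat (A1 A2 : finType) (X : Type) (d : X) (f : A1 * A2 -> nat -> X)
  (h : history A1 A2) : X :=
  match h with [::] => d | e :: _ => f e (size h) end.

Lemma construct (R : realType) (A1 A2 : finType) (G : game R A1 A2) (a1 : A1) (a2 : A2)
  P1 Q1 P1' Q1' P2 Q2 P2' Q2' (K : nat) :
  stage_nash MP G P1 Q1 -> stage_nash MP G P1' Q1' ->
  stage_nash MP G P2 Q2 -> stage_nash MP G P2' Q2' ->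
  ~ stage_nash MP G (dirac R a1) (dirac R a2) ->
  (forall b, u1 G b a2 - u1 G a1 a2 <= K%:R * (exp_pay (u1 G) P1 Q1 - exp_pay (u1 G) P1' Q1')) ->
  (forall b, u2 G a1 b - u2 G a1 a2 <= K%:R * (exp_pay (u2 G) P2 Q2 - exp_pay (u2 G) P2' Q2')) ->
  in_GLS MP G.
Proof.
move=> n1 n1' n2 n2' nn g1 g2.
pose f1 := fun e k => gsel K (cls a1 a2 e) k P1 P1' P2 P2'.
pose f2 := fun e k => gsel K (cls a1 a2 e) k Q1 Q1' Q2 Q2'.
pose s1 := mkstrat (dirac R a1) f1.
pose s2 := mkstrat (dirac R a2) f2.
have nsel : forall e k, stage_nash MP G (f1 e k) (f2 e k).
  by move=> e k; rewrite /f1 /f2 /gsel; case: ifP => _; case: ifP.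
have av1 : avail_strat true s1.
  by case=> [|e h] /=; [apply: dirac_mixed | case: (nsel e (size h).+1)].
have av2 : avail_strat false s2.
  by case=> [|e h] /=; [exists a2 | case: (nsel e (size h).+1)].
pose W u c := \sum_(k < K + K) exp_pay u (gsel K c (1 + k) P1 P1' P2 P2') (gsel K c (1 + k) Q1 Q1' Q2 Q2').
have keyle1 : forall e t1, avail_strat true t1 -> cont_pay (u1 G) t1 s2 [:: e] (K + K) <= W (u1 G) (cls a1 a2 e).
  move=> e t1 ht1; have := cont_shift (u1 G) t1 s2 [:: e] (K + K) [::]; rewrite cats0 => ->.
  exact: (@markov_le1 _ _ _ G (fun k => f1 e (1 + k)) (fun k => f2 e (1 + k)) (shift s2 [:: e])
           (fun k => nsel e (1 + k)%N) (fun h => erefl) (shift t1 [:: e]) (fun h => ht1 _) (K + K) [::]).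
have keyle2 : forall e t2, avail_strat false t2 -> cont_pay (u2 G) s1 t2 [:: e] (K + K) <= W (u2 G) (cls a1 a2 e).
  move=> e t2 ht2; have := cont_shift (u2 G) s1 t2 [:: e] (K + K) [::]; rewrite cats0 => ->.
  exact: (@markov_le2 _ _ _ G (fun k => f1 e (1 + k)) (fun k => f2 e (1 + k)) (shift s1 [:: e])
           (fun k => nsel e (1 + k)%N) (fun h => erefl) (shift t2 [:: e]) (fun h => ht2 _) (K + K) [::]).
have keyeq : forall u e, cont_pay u s1 s2 [:: e] (K + K) = W u (cls a1 a2 e).
  move=> u e; have := cont_shift u s1 s2 [:: e] (K + K) [::]; rewrite cats0 => ->.
  exact: (@markov_eq _ _ _ u (fun k => f1 e (1 + k)) (fun k => f2 e (1 + k)) (shift s1 [:: e]) (shift s2 [:: e])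
           (fun k => nash_mixed (nsel e (1 + k)%N)) (fun h => erefl) (fun h => erefl) (K + K) [::]).
have W1 : W (u1 G) 0%N - W (u1 G) 1%N = K%:R * (exp_pay (u1 G) P1 Q1 - exp_pay (u1 G) P1' Q1').
  rewrite /W -sumrB.
  rewrite (eq_bigr (fun k : 'I_(K + K) => if (1 + k <= K)%N then exp_pay (u1 G) P1 Q1 - exp_pay (u1 G) P1' Q1' else 0)).
    by rewrite count1 (minn_idPr (leq_addr K K)).
  by move=> k _; rewrite /gsel; case: ifP => _ /=; rewrite ?subrr.
have W2 : W (u2 G) 0%N - W (u2 G) 2%N = K%:R * (exp_pay (u2 G) P2 Q2 - exp_pay (u2 G) P2' Q2').
  rewrite /W -sumrB.
  rewrite (eq_bigr (fun k : 'I_(K + K) => if (1 + k <= K)%N then 0 else exp_pay (u2 G) P2 Q2 - exp_pay (u2 G) P2' Q2')).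
    by rewrite count2 (minn_idPr (leq_addr K K)) addnK.
  by move=> k _; rewrite /gsel; case: ifP => _ /=; rewrite ?subrr.
exists (K + K).+1, s1, s2; split => //; last by exists [::]; split.
move=> [|e h] hsz.
- rewrite subn0; split.
  + by move=> h; apply: av1.
  + by move=> h; apply: av2.
  + move=> t1 ht1.
    change (rep_pay (u1 G) t1 s2 (K + K).+1 <= rep_pay (u1 G) s1 s2 (K + K).+1).
    rewrite /rep_pay /=.
    have mt := avail_mixed (ht1 [::]).
    apply: le_trans (sum2_le (G := fun b1 b2 => u1 G b1 b2 + W (u1 G) (cls a1 a2 (b1, b2))) mt (@dirac_mixed R _ a2) _) _.
      by move=> b1 b2; rewrite lerD2l; apply: keyle1.
    rewrite collapse2 collapse1 sum_dirac keyeq.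
    apply: le_trans (_ : _ <= \sum_(b1 : A1) t1 [::] b1 * (u1 G a1 a2 + W (u1 G) (cls a1 a2 (a1, a2)))) _.
      apply: ler_sum => b1 _; apply: ler_wpM2l; first by case: mt.
      case: (eqVneq b1 a1) => [->|ne]; first by [].
      rewrite /cls /= ne !eqxx /=.
      have := g1 b1; rewrite -W1 => hh; lra.
    by rewrite -mulr_suml; case: mt => _ ->; rewrite mul1r.
  + move=> t2 ht2.
    change (rep_pay (u2 G) s1 t2 (K + K).+1 <= rep_pay (u2 G) s1 s2 (K + K).+1).
    rewrite /rep_pay /=.
    have mt := avail_mixed (ht2 [::]).
    apply: le_trans (sum2_le (G := fun b1 b2 => u2 G b1 b2 + W (u2 G) (cls a1 a2 (b1, b2))) (@dirac_mixed R _ a1) mt _) _.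
      by move=> b1 b2; rewrite lerD2l; apply: keyle2.
    rewrite !collapse1 sum_dirac keyeq.
    apply: le_trans (_ : _ <= \sum_(b2 : A2) t2 [::] b2 * (u2 G a1 a2 + W (u2 G) (cls a1 a2 (a1, a2)))) _.
      apply: ler_sum => b2 _; apply: ler_wpM2l; first by case: mt.
      case: (eqVneq b2 a2) => [->|ne]; first by [].
      rewrite /cls /= ne !eqxx /=.
      have := g2 b2; rewrite -W2 => hh; lra.
    by rewrite -mulr_suml; case: mt => _ ->; rewrite mul1r.
- pose F1 := fun k => f1 e (size (e :: h) + k)%N.
  pose F2 := fun k => f2 e (size (e :: h) + k)%N.
  have hs1 : forall h', shift s1 (e :: h) h' = F1 (size h').
    by move=> h'; rewrite /shift /= size_cat.
  have hs2 : forall h', shift s2 (e :: h) h' = F2 (size h').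
    by move=> h'; rewrite /shift /= size_cat.
  have nf : forall k, stage_nash MP G (F1 k) (F2 k).
    by move=> k; apply: nsel.
  split.
  + by move=> h'; apply: av1.
  + by move=> h'; apply: av2.
  + move=> t1 ht1; rewrite /rep_pay.
    rewrite (@markov_eq _ _ _ (u1 G) F1 F2 _ _ (fun k : nat => @nash_mixed _ _ _ G _ _ (nf k)) hs1 hs2).
    exact: (@markov_le1 _ _ _ G F1 F2 _ nf hs2 t1 ht1).
  + move=> t2 ht2; rewrite /rep_pay.
    rewrite (@markov_eq _ _ _ (u2 G) F1 F2 _ _ (fun k : nat => @nash_mixed _ _ _ G _ _ (nf k)) hs1 hs2).
    exact: (@markov_le2 _ _ _ G F1 F2 _ nf hs1 t2 ht2).
Qed.

Lemma term_le_sum (R : realType) (A : finType) (F : A -> R) (b : A) :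
  (forall a, 0 <= F a) -> F b <= \sum_(a : A) F a.
Proof. by move=> h; rewrite (bigD1 b) //= lerDl sumr_ge0. Qed.

Lemma bound_K (R : realType) (B d : R) (K : nat) :
  0 < d -> ((Num.truncn (B / d)).+1 <= K)%N -> B <= K%:R * d.
Proof.
move=> hd hK; rewrite -ler_pdivrMr //.
apply: le_trans (ltW (truncnS_gt _)) _; by rewrite ler_nat.
Qed.

Theorem mainTheorem14 (R : realType) (A1 A2 : finType) (G : game R A1 A2) :
  (0 < #|A1|)%N -> (0 < #|A2|)%N ->
  more_than_one (V1 MP G) -> more_than_one (V2 MP G) ->
  in_GLS MM G -> in_GLS MP G.
Proof.
move=> hA1 hA2 hv1 hv2 hmm.
have [a1 [a2 nn]] := pure_nonnash hA1 hA2 hmm.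
have [P1 [Q1 [P1' [Q1' [n1 n1' lt1]]]]] := get_two1 hv1.
have [P2 [Q2 [P2' [Q2' [n2 n2' lt2]]]]] := get_two2 hv2.
have d1p : 0 < exp_pay (u1 G) P1 Q1 - exp_pay (u1 G) P1' Q1' by rewrite subr_gt0.
have d2p : 0 < exp_pay (u2 G) P2 Q2 - exp_pay (u2 G) P2' Q2' by rewrite subr_gt0.
set B1 := \sum_(b : A1) `|u1 G b a2 - u1 G a1 a2|.
set B2 := \sum_(b : A2) `|u2 G a1 b - u2 G a1 a2|.
pose K := ((Num.truncn (B1 / (exp_pay (u1 G) P1 Q1 - exp_pay (u1 G) P1' Q1'))).+1 +
           (Num.truncn (B2 / (exp_pay (u2 G) P2 Q2 - exp_pay (u2 G) P2' Q2'))).+1)%N.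
apply: (@construct _ _ _ G a1 a2 P1 Q1 P1' Q1' P2 Q2 P2' Q2' K n1 n1' n2 n2' nn).
- move=> b; apply: le_trans (ler_norm _) _.
  apply: le_trans (term_le_sum (F := fun b => `|u1 G b a2 - u1 G a1 a2|) b _) _ => //.
  by apply: bound_K => //; rewrite leq_addr.
- move=> b; apply: le_trans (ler_norm _) _.
  apply: le_trans (term_le_sum (F := fun b => `|u2 G a1 b - u2 G a1 a2|) b _) _ => //.
  by apply: bound_K => //; rewrite leq_addl.
Qed.
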